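(* Let $F$ be a free group of finite rank $N\ge2$ with free basis $B$, $X$ its Cayley graph with respect to $B$, and $r\in\mathbb{N}$. Let $P$ be a geodesic path in $X$ from $u\in V(X)$ to $v\in V(X)$ passing through the vertices $v_0=u,v_1,\dots,v_m=v$ in this order. Let $T_i\in\mathcal{R}_r(v_i)$ for $i=0,\dots,m$. If $T_{i-1}$ and $T_i$ are connectable for every $i=1,\dots,m$, then $T_0$ and $T_m$ are connectable.
   Context: $X$ is a tree with path metric in which each edge has length one; $\partial F=\partial X$. $\mathcal{H}(\partial F)$ is the set of closed subsets of $\partial F$ with at least two points; for $S\in\mathcal{H}(\partial F)$, $CH(S)$ is the union of all geodesic lines in $X$ joining two points of $S$. $B(v,r)$ is the closed ball of radius $r$ about $v$, and $B(u,v,r)=B(u,r)\cap B(v,r)$. $\mathcal{R}_r(v)$ is the set of subgraphs $T\subset B(v,r)$ with $v\in T$ such that $T=CH(S)\cap B(v,r)$ for some $S\in\mathcal{H}(\partial F)$. For $T_1\in\mathcal{R}_r(u)$ and $T_2\in\mathcal{R}_r(v)$, $T_1$ and $T_2$ are connectable if $T_1\cap B(u,v,r)=T_2\cap B(u,v,r)$ (in particular they are always connectable when $B(u,v,r)=\emptyset$). *)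

(* Defs.v *)
From mathcomp Require Import all_boot all_order all_algebra.
Set Implicit Arguments. Unset Strict Implicit. Unset Printing Implicit Defensive.
Import GRing.Theory Num.Theory.

(* The free group F of rank N on the basis B = {b_0,...,b_{N-1}}:
   elements are reduced words over the letters b_i^{+1} / b_i^{-1}.
   X is the Cayley graph w.r.t. B (edges g -- g b^{+-1}); it is a tree,
   and all its subgraphs considered here (CH(S), balls, their intersections)
   are induced subgraphs, so they are represented by their vertex sets. *)

Section FreeTree.
Variable N : nat.

(* letter (i, true) = b_i, (i, false) = b_i^{-1} *)
Definition Letter := ('I_N * bool)%type.
Definition linv (a : Letter) : Letter := (a.1, ~~ a.2).

Definition reduced (s : seq Letter) : bool :=
  sorted (fun a b => b != linv a) s.

Definition Vertex := {s : seq Letter | reduced s}.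

Definition adj (x y : Vertex) : Prop :=
  exists a : Letter, val y = rcons (val x) a \/ val x = rcons (val y) a.

Definition walk (x y : Vertex) (n : nat) : Prop :=
  exists p : nat -> Vertex,
    [/\ p 0 = x, p n = y & forall i, i < n -> adj (p i) (p i.+1)].

Definition is_dist (x y : Vertex) (n : nat) : Prop :=
  walk x y n /\ forall k, walk x y k -> n <= k.

Definition ball (v : Vertex) (r : nat) (x : Vertex) : Prop :=
  exists n, n <= r /\ walk v x n.

(* boundary dF = dX: infinite reduced words *)
Definition End := {xi : nat -> Letter | forall n, xi n.+1 != linv (xi n)}.

(* closed subsets of dF (cylinder / Gromov topology) *)
Definition closed_bd (S : End -> Prop) : Prop :=
  forall xi : End,
    (forall k, exists eta : End, S eta /\ forall i, i < k -> proj1_sig eta i = proj1_sig xi i) ->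
    S xi.

Definition in_H (S : End -> Prop) : Prop :=
  closed_bd S /\ exists xi eta : End, [/\ S xi, S eta & xi <> eta].

Definition conv_to (g : nat -> Vertex) (xi : End) : Prop :=
  forall k, exists n0, forall n, n0 <= n ->
    take k (val (g n)) = mkseq (proj1_sig xi) k.

Definition geod_line (g : int -> Vertex) : Prop :=
  forall i j : int, is_dist (g i) (g j) `|i - j|%N.

Definition line_joins (g : int -> Vertex) (eta xi : End) : Prop :=
  [/\ geod_line g, conv_to (fun n => g (Posz n)) xi
    & conv_to (fun n => g (- Posz n)%R) eta].

Definition CH (S : End -> Prop) (x : Vertex) : Prop :=
  exists (xi eta : End) (g : int -> Vertex),
    [/\ S xi, S eta, line_joins g eta xi & exists i, g i = x].

Definition in_R (r : nat) (v : Vertex) (T : Vertex -> Prop) : Prop :=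
  [/\ forall x, T x -> ball v r x, T v &
      exists S, in_H S /\ forall x, T x <-> (CH S x /\ ball v r x)].

Definition connectable (r : nat) (u : Vertex) (T1 : Vertex -> Prop)
    (v : Vertex) (T2 : Vertex -> Prop) : Prop :=
  forall x, (T1 x /\ (ball u r x /\ ball v r x)) <->
            (T2 x /\ (ball u r x /\ ball v r x)).

Definition geodesic_path (vs : nat -> Vertex) (m : nat) : Prop :=
  (forall i, i < m -> adj (vs i) (vs i.+1)) /\ is_dist (vs 0) (vs m) m.

End FreeTree.

(* Main.v *)
Require Import Defs.
From mathcomp Require Import all_boot all_order all_algebra.
From mathcomp Require Import zify.

Section Work.
Variable N : nat.
Notation L := (Letter N).

Fixpoint cp (s t : seq L) : nat :=
  match s, t with
  | a :: s', b :: t' => if a == b then (cp s' t').+1 else 0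
  | _, _ => 0
  end.

Lemma cp_leL s t : cp s t <= size s.
Proof.
elim: s t => [|a s IH] [|b t] //=; case: eqP => // _; exact: IH.
Qed.

Lemma cp_leR s t : cp s t <= size t.
Proof.
elim: s t => [|a s IH] [|b t] //=; case: eqP => // _; exact: IH.
Qed.

Lemma cp_refl s : cp s s = size s.
Proof. by elim: s => //= a s ->; rewrite eqxx. Qed.

Lemma cp_take s t : cp s t = size t -> take (size t) s = t.
Proof.
elim: s t => [|a s IH] [|b t] //=; case: eqP => // -> [] /IH ->; done.
Qed.

Lemma cp_rcons s v a : cp s (rcons v a) =
  if (cp s v == size v) && (size v < size s) && (nth a s (size v) == a)
  then (size v).+1 else cp s v.
Proof.
elim: v s => [|b v IH] [|c s] //=.
- by case: s.
- idtac.
case: eqP => [_|ne] /=.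
  + by rewrite IH eqSS ltnS; case: ifP.
  + done.
Qed.

Lemma cp_step s v a :
  (cp s (rcons v a) = (size v).+1 /\ cp s v = size v /\ size v < size s
     /\ nth a s (size v) = a) \/ cp s (rcons v a) = cp s v.
Proof.
rewrite cp_rcons; case: ifP => [/andP[/andP[/eqP q1 q2] /eqP q3]|_]; by [left|right].
Qed.

Definition f (x v : seq L) := size x + size v - 2 * cp x v.

Definition fV (x v : Vertex N) := f (val x) (val v).

Lemma adj_sym (x y : Vertex N) : adj x y -> adj y x.
Proof. by case=> a [e|e]; exists a; [right|left]. Qed.

Lemma F1 x v w : adj v w -> fV x w = fV x v + 1 \/ fV x v = fV x w + 1.
Proof.
rewrite /fV /f.
have h1 := cp_leL (val x) (val v); have h2 := cp_leR (val x) (val v).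
have h3 := cp_leL (val x) (val w); have h4 := cp_leR (val x) (val w).
case=> a [e|e]; rewrite e ?size_rcons in h1 h2 h3 h4 *.
- have [[c1 [c2 _]]|c1] := cp_step (val x) (val v) a; rewrite c1 in h3 h4 *; lia.
- have [[c1 [c2 _]]|c1] := cp_step (val x) (val w) a; rewrite c1 in h1 h2 *; lia.
Qed.

Lemma F2 x v w1 w2 : adj v w1 -> adj v w2 ->
  fV x w1 + 1 = fV x v -> fV x w2 + 1 = fV x v -> w1 = w2.
Proof.
rewrite /fV /f.
have h1 := cp_leL (val x) (val v); have h2 := cp_leR (val x) (val v).
have h3 := cp_leL (val x) (val w1); have h4 := cp_leR (val x) (val w1).
have h5 := cp_leL (val x) (val w2); have h6 := cp_leR (val x) (val w2).
case=> a1 [e1|e1]; case=> a2 [e2|e2].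
- rewrite e1 e2 ?size_rcons in h3 h4 h5 h6 *.
  have [[c1 [c2 [c3 c4]]]|c1] := cp_step (val x) (val v) a1; rewrite c1 in h3 h4 *; last lia.
  have [[d1 [d2 [d3 d4]]]|d1] := cp_step (val x) (val v) a2; rewrite d1 in h5 h6 *; last lia.
  move=> _ _; apply: val_inj; rewrite e1 e2 -c4 -d4.
  by rewrite (set_nth_default a1).
- rewrite e1 ?size_rcons in h3 h4 *.
  rewrite e2 ?size_rcons in e1 h1 h2 h3 h4 *.
  have [[c1 [c2 _]]|c1] := cp_step (val x) (val w2) a2; rewrite c1 in h1 h2 h3 h4 *;
  have [[d1 [d2 _]]|d1] := cp_step (val x) (rcons (val w2) a2) a1;
  rewrite d1 ?size_rcons ?c1 in h3 h4 *; lia.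
- rewrite e2 ?size_rcons in h5 h6 *.
  rewrite e1 ?size_rcons in e2 h1 h2 h5 h6 *.
  have [[c1 [c2 _]]|c1] := cp_step (val x) (val w1) a1; rewrite c1 in h1 h2 h5 h6 *;
  have [[d1 [d2 _]]|d1] := cp_step (val x) (rcons (val w1) a1) a2;
  rewrite d1 ?size_rcons ?c1 in h5 h6 *; lia.
- move=> _ _; apply: val_inj; rewrite e1 in e2.
  by case: (rcons_inj e2).
Qed.

Lemma F0 x : fV x x = 0.
Proof. by rewrite /fV /f cp_refl; lia. Qed.

Lemma F4 x v : fV x v = 0 -> v = x.
Proof.
rewrite /fV /f => h.
have h1 := cp_leL (val x) (val v); have h2 := cp_leR (val x) (val v).
have e1 : cp (val x) (val v) = size (val v) by lia.
have e2 : size (val v) = size (val x) by lia.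
apply: val_inj => /=; rewrite -(cp_take _ _ e1) e2 take_size //.
Qed.

Lemma F5 x v : 0 < fV x v -> exists w, adj v w /\ fV x w + 1 = fV x v.
Proof.
rewrite /fV /f => h.
have h1 := cp_leL (val x) (val v); have h2 := cp_leR (val x) (val v).
case: (eqVneq (cp (val x) (val v)) (size (val v))) => [e|ne].
- have lt : size (val v) < size (val x) by lia.
  have [a0 _] : exists a0 : L, True.
    by move: lt; case: (val x) => [|a0 ?] //; exists a0.
  have rw : reduced (take (size (val v)).+1 (val x)).
    exact: take_sorted (valP x).
  exists (exist (fun s : seq L => reduced s) _ rw : Vertex N); split.
    exists (nth a0 (val x) (size (val v))); left => /=.
    by rewrite (take_nth a0 lt) (cp_take _ _ e).
  rewrite /= (take_nth a0 lt) (cp_take _ _ e) size_rcons cp_rcons e eqxx lt /=.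
  rewrite (set_nth_default a0 _ lt) eqxx. move: lt; rewrite /=.
  lia.
- have [E|[w0 [a E]]] : val v = [::] \/ exists w0 a, val v = rcons w0 a.
    by case/lastP: (val v) => [|w0 a]; [left|right; exists w0, a].
    by rewrite E in ne h2 *; move: h2; rewrite leqn0 => /eqP h2; rewrite h2 in ne.
  have rw : reduced w0.
    have := take_sorted (size w0) (valP v); rewrite E -cats1 take_size_cat //.
  exists (exist (fun s : seq L => reduced s) _ rw : Vertex N); split.
    by exists a; right.
  rewrite /= ; rewrite E size_rcons in ne h1 h2 *.
  have [[c1 [c2 _]]|c1] := cp_step (val x) w0 a; rewrite c1 in ne h1 h2 *.
    by rewrite eqxx in ne.
  have E2 : sval v = rcons w0 a := E.
  have := cp_leL (val x) w0; have := cp_leR (val x) w0; move: h; rewrite /= E2 c1 size_rcons.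
have Ex : val x = sval x := erefl. rewrite Ex in ne h1 h2 * => *. lia.
Qed.

Lemma walk_lb x v n : walk v x n -> fV x v <= n.
Proof.
case=> p [p0 pn hs].
have H : forall k, k <= n -> fV x v <= k + fV x (p k).
  elim=> [|k IH] hk; first by rewrite p0.
  have := F1 x _ _ (hs k hk); have := IH (ltnW hk); lia.
by have := H n (leqnn n); rewrite pn F0 addn0.
Qed.

Lemma walk_ub x v : walk v x (fV x v).
Proof.
move e: (fV x v) => n; elim: n v e => [|n IH] v e.
- rewrite (F4 _ _ e); exists (fun _ => x); split => //.
- have [w [hvw hw]] : exists w, adj v w /\ fV x w + 1 = fV x v by apply: F5; rewrite e.
  have [p [p0 pn hs]] : walk w x n by apply: IH; lia.
  exists (fun k => if k is k'.+1 then p k' else v); split => //.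
  case => [_|k hk] /=; first by rewrite p0.
  exact: hs.
Qed.

Lemma ballE v r x : ball v r x <-> fV x v <= r.
Proof.
split.
- case=> n [hn hw]; have := walk_lb _ _ _ hw; lia.
- move=> h; exists (fV x v); split => //; exact: walk_ub.
Qed.

Lemma splice (vs : nat -> Vertex N) m i : geodesic_path vs m -> 0 < i < m ->
  vs i.-1 <> vs i.+1.
Proof.
move=> [hadj [_ hmin]] /andP[hi1 hi2] e.
have : walk (vs 0) (vs m) (m - 2).
  exists (fun j => if j < i.-1 then vs j else vs j.+2); split.
  - case: ifP => // h.
    have -> : 2 = i.+1 by lia.
    by rewrite -e; have -> : i.-1 = 0 by lia.
  - have -> : (m - 2 < i.-1) = false by lia.
    by have -> : (m - 2).+2 = m by lia.
  - move=> j hj.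
    case: (ltnP j.+1 i.-1) => h1.
      rewrite (ltnW h1); apply: hadj; lia.
    case: (ltnP j i.-1) => h2.
      have -> : j.+3 = i.+1 by lia.
      rewrite -e; have -> : i.-1 = j.+1 by lia.
      apply: hadj; lia.
    apply: hadj; lia.
move/hmin; lia.
Qed.

End Work.
Arguments fV {N}. Arguments F1 {N}. Arguments F2 {N}. Arguments splice {N vs m i}. Arguments adj_sym {N x y}. Arguments ballE {N}.

Lemma no_peak (g : nat -> nat) m :
  (forall i, i < m -> g i.+1 = g i + 1 \/ g i = g i.+1 + 1) ->
  (forall i, 0 < i < m -> ~ (g i.-1 + 1 = g i /\ g i.+1 + 1 = g i)) ->
  forall i, i <= m -> g i <= maxn (g 0) (g m).
Proof.
move=> hstep hpeak.
have persist : forall d j, j + d < m -> g j.+1 = g j + 1 -> g (j + d).+1 = g (j + d) + 1.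
  elim=> [|d IH] j hd hu; first by rewrite addn0.
  have hd' : j + d < m by lia.
  have hu' := IH j hd' hu.
  case: (hstep (j + d.+1) hd) => // hdn.
  exfalso; apply: (hpeak (j + d.+1)); first by apply/andP; split; lia.
  rewrite addnS in hdn *; split; [by rewrite /= hu' addn1 | lia].
have key : forall i, i <= m ->
    g i <= g 0 \/ (forall k, i <= k < m -> g k.+1 = g k + 1).
  elim=> [|i IH] hi; first by left.
  case: (IH (ltnW hi)) => [h0|hall]; last first.
    by right => k /andP[k1 k2]; apply: hall; apply/andP; split; lia.
  case: (hstep i hi) => hs.
    right => k /andP[k1 k2].
    have := persist (k - i) i; have -> : i + (k - i) = k by lia.
    move=> H; apply: H hs; lia.
  left; lia.
move=> i hi; case: (key i hi) => [h0|hall]; first by apply: leq_trans h0 (leq_maxl _ _).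
apply: leq_trans (leq_maxr _ _).
have : forall d, i + d <= m -> g i <= g (i + d).
  elim=> [|d IH] hd; first by rewrite addn0.
  have hd' : i + d <= m by lia.
  have := IH hd'.
  have hk : i <= i + d < m by apply/andP; split; lia.
  have := hall (i + d) hk.
  rewrite (addnS i d); move=> h1 h2; rewrite h1; lia.
move/(_ (m - i)); have -> : i + (m - i) = m by lia.
by apply; lia.
Qed.

Theorem mainTheorem5 (N : nat) (hN : 2 <= N) (r m : nat)
    (vs : nat -> Vertex N) (T : nat -> Vertex N -> Prop) :
  geodesic_path vs m ->
  (forall i, i <= m -> in_R r (vs i) (T i)) ->
  (forall i, 1 <= i <= m -> connectable r (vs i.-1) (T i.-1) (vs i) (T i)) ->
  connectable r (vs 0) (T 0) (vs m) (T m).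
Proof.
move=> hg _ hc.
have hadj := hg.1.
have balls : forall x, ball (vs 0) r x -> ball (vs m) r x ->
    forall i, i <= m -> ball (vs i) r x.
  move=> x /ballE b0 /ballE bm i hi; apply/ballE.
  have h : fV x (vs i) <= maxn (fV x (vs 0)) (fV x (vs m)).
    apply: (no_peak (fun i => fV x (vs i)) m) => //.
    - move=> j hj; exact: F1 x _ _ (hadj j hj).
    - move=> j hj [h1 h2]; apply: (splice hg hj).
      apply: (F2 x (vs j)) => //.
      + apply: adj_sym; have := hadj j.-1; have -> : j.-1.+1 = j by lia.
        apply; lia.
      + apply: hadj; lia.
  by apply: leq_trans h _; rewrite geq_max b0 bm.
move=> x.
suff H : ball (vs 0) r x -> ball (vs m) r x -> forall k, k <= m -> (T 0 x <-> T k x).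
  split=> [[t [b0 bm]]|[t [b0 bm]]]; split => //; have := H b0 bm m (leqnn m); tauto.
move=> b0 bm; elim=> [|k IH] hk; first by [].
have hk1 : 1 <= k.+1 <= m by apply/andP; split; lia.
have := hc k.+1 hk1.
move=> /(_ x) /=.
have := balls x b0 bm k (ltnW hk); have := balls x b0 bm k.+1 hk.
have := IH (ltnW hk). tauto.
Qed.
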